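(* Let $\ell\ge1$, let $R\subset\mathbb N$ be a set of $\ell$-recurrence, $(X,T)$ a minimal system and $U\subset X$ a nonempty open set. Then $R\cap N^\ell(U)$ is a set of $\ell$-recurrence, where $N^\ell(U)=\{n\in\mathbb N: U\cap T^{-n}U\cap\dots\cap T^{-\ell n}U\ne\emptyset\}$.
   Context: A system is a compact metric space with a homeomorphism; minimal means no proper nonempty closed invariant subset. $R$ is a set of $\ell$-recurrence if for every minimal system $(Y,S)$ and nonempty open $V\subset Y$ there exists $n\in R$ with $V\cap S^{-n}V\cap\dots\cap S^{-\ell n}V\ne\emptyset$. *)

(* Defs.v *)
From Stdlib Require Import Reals List.
Open Scope R_scope.

Definition is_metric {X : Type} (d : X -> X -> R) : Prop :=
  (forall x y, 0 <= d x y) /\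
  (forall x y, d x y = 0 <-> x = y) /\
  (forall x y, d x y = d y x) /\
  (forall x y z, d x z <= d x y + d y z).

Definition is_open {X : Type} (d : X -> X -> R) (U : X -> Prop) : Prop :=
  forall x, U x -> exists eps, 0 < eps /\ forall y, d x y < eps -> U y.

Definition is_closed {X : Type} (d : X -> X -> R) (A : X -> Prop) : Prop :=
  is_open d (fun x => ~ A x).

Definition is_compact {X : Type} (d : X -> X -> R) : Prop :=
  forall (I : Type) (C : I -> X -> Prop),
    (forall i, is_open d (C i)) ->
    (forall x, exists i, C i x) ->
    exists l : list I, forall x, exists i, In i l /\ C i x.

Definition is_continuous {X : Type} (d : X -> X -> R) (f : X -> X) : Prop :=
  forall x eps, 0 < eps ->
    exists delta, 0 < delta /\ forall y, d x y < delta -> d (f x) (f y) < eps.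

Definition is_homeomorphism {X : Type} (d : X -> X -> R) (T : X -> X) : Prop :=
  is_continuous d T /\
  exists Tinv : X -> X, is_continuous d Tinv /\
    (forall x, Tinv (T x) = x) /\ (forall x, T (Tinv x) = x).

Definition is_system {X : Type} (d : X -> X -> R) (T : X -> X) : Prop :=
  is_metric d /\ is_compact d /\ is_homeomorphism d T.

(* A is invariant: T A = A, i.e. x in A iff T x in A (T bijective) *)
Definition is_invariant {X : Type} (T : X -> X) (A : X -> Prop) : Prop :=
  forall x, A x <-> A (T x).

Definition is_minimal {X : Type} (d : X -> X -> R) (T : X -> X) : Prop :=
  forall A : X -> Prop, is_closed d A -> is_invariant T A ->
    (exists x, A x) -> forall x, A x.

Definition multiple_return {X : Type} (T : X -> X) (l n : nat) (U : X -> Prop) : Prop :=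
  exists x, forall j, (j <= l)%nat -> U (Nat.iter (j * n) T x).

Definition return_set {X : Type} (T : X -> X) (l : nat) (U : X -> Prop) : nat -> Prop :=
  fun n => multiple_return T l n U.

(* R is a set of ℓ-recurrence; ℕ = {1,2,...}, so only positive n ∈ R count *)
Definition recurrence_set (l : nat) (Rs : nat -> Prop) : Prop :=
  forall (Y : Type) (dY : Y -> Y -> R) (S : Y -> Y),
    is_system dY S -> is_minimal dY S ->
    forall V : Y -> Prop, is_open dY V -> (exists y, V y) ->
      exists n, (0 < n)%nat /\ Rs n /\ multiple_return S l n V.

(* Main.v *)
Require Import Defs.
From Stdlib Require Import Reals List Arith Lia Lra Cantor.
From Stdlib Require Import Classical ProofIrrelevance IndefiniteDescription.
Open Scope R_scope.

Lemma met_refl {X} (d : X->X->R) : is_metric d -> forall x, d x x = 0.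
Proof. intros [_ [H _]] x. apply H; reflexivity. Qed.
Lemma met_sym {X} (d : X->X->R) : is_metric d -> forall x y, d x y = d y x.
Proof. intros [_ [_ [H _]]]; auto. Qed.
Lemma met_tri {X} (d : X->X->R) : is_metric d -> forall x y z, d x z <= d x y + d y z.
Proof. intros [_ [_ [_ H]]]; auto. Qed.
Lemma met_pos {X} (d : X->X->R) : is_metric d -> forall x y, 0 <= d x y.
Proof. intros [H _]; auto. Qed.

Lemma ball_open {X} (d : X->X->R) (c:X) r : is_metric d -> is_open d (fun y => d c y < r).
Proof. intros Hm y Hy. exists (r - d c y). split. lra. intros z Hz.
  pose proof (met_tri d Hm c y z). lra. Qed.

Lemma open_ext {X} (d : X->X->R) (A B : X -> Prop) :
  (forall x, A x <-> B x) -> is_open d A -> is_open d B.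
Proof. intros H Ho x Hx. apply H in Hx. destruct (Ho x Hx) as [e [He H2]].
  exists e; split; auto. intros y Hy; apply H; auto. Qed.

Lemma closed_ext {X} (d : X->X->R) (A B : X -> Prop) :
  (forall x, A x <-> B x) -> is_closed d A -> is_closed d B.
Proof. intros H Ho. unfold is_closed in *. apply (open_ext d (fun x => ~ A x)); auto.
  intro x; specialize (H x); tauto. Qed.

Lemma open_preimage {X} (d : X->X->R) (f : X->X) (B : X->Prop) :
  is_continuous d f -> is_open d B -> is_open d (fun x => B (f x)).
Proof. intros Hc Ho x Hx. destruct (Ho _ Hx) as [e [He H]].
  destruct (Hc x e He) as [dl [Hd H2]]. exists dl; split; [exact Hd|].
  intros y Hy. apply H. auto. Qed.

Lemma cont_comp {X} (d : X->X->R) f g : is_continuous d f -> is_continuous d g ->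
  is_continuous d (fun x => f (g x)).
Proof. intros Hf Hg x e He. destruct (Hf (g x) e He) as [d1 [H1 H1']].
  destruct (Hg x d1 H1) as [d2 [H2 H2']]. exists d2. split; auto. Qed.

Lemma cont_iter {X} (d : X->X->R) f n : is_continuous d f ->
  is_continuous d (fun x => Nat.iter n f x).
Proof. intro Hf. induction n; simpl.
  - intros x e He. exists e; split; auto.
  - apply (cont_comp d f (fun x => Nat.iter n f x)); auto. Qed.

Lemma open_and {X} (d : X->X->R) A B : is_open d A -> is_open d B -> is_open d (fun x => A x /\ B x).
Proof. intros HA HB x [Ha Hb]. destruct (HA x Ha) as [e1 [H1 H1']].
  destruct (HB x Hb) as [e2 [H2 H2']]. exists (Rmin e1 e2). split.
  apply Rmin_pos; auto. intros y Hy. split.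
  apply H1'. pose proof (Rmin_l e1 e2); lra. apply H2'. pose proof (Rmin_r e1 e2); lra. Qed.

Lemma open_or {X} (d : X->X->R) A B : is_open d A -> is_open d B -> is_open d (fun x => A x \/ B x).
Proof. intros HA HB x [Ha|Hb].
  - destruct (HA x Ha) as [e1 [H1 H1']]. exists e1; split; auto.
  - destruct (HB x Hb) as [e1 [H1 H1']]. exists e1; split; auto. Qed.

Lemma closed_and {X} (d : X->X->R) A B : is_closed d A -> is_closed d B -> is_closed d (fun x => A x /\ B x).
Proof. intros HA HB. unfold is_closed. apply (open_ext d (fun x => ~ A x \/ ~ B x)).
  intro x; tauto. apply open_or; auto. Qed.

Lemma closed_not {X} (d : X->X->R) A : is_open d A -> is_closed d (fun x => ~ A x).
Proof. intro H. unfold is_closed. apply (open_ext d A); auto. intro x; split. tauto. apply NNPP. Qed.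

Definition orb {X} (F Finv : X -> X) (B : X -> Prop) (z : X) : Prop :=
  exists a b, B (Nat.iter a Finv (Nat.iter b F z)).

Lemma orb_open {X} (d : X->X->R) F Finv B : is_continuous d F -> is_continuous d Finv ->
  is_open d B -> is_open d (orb F Finv B).
Proof. intros HF HG HB z [a [b Hab]].
  assert (Ho : is_open d (fun z => B (Nat.iter a Finv (Nat.iter b F z)))).
  { apply (open_preimage d (fun z => Nat.iter a Finv (Nat.iter b F z))); auto.
    apply (cont_comp d (fun x => Nat.iter a Finv x) (fun x => Nat.iter b F x)); apply cont_iter; auto. }
  destruct (Ho z Hab) as [e [He H]]. exists e; split; auto. intros y Hy; exists a, b; auto. Qed.

Lemma orb_inv {X} (F Finv : X -> X) B : (forall x, Finv (F x) = x) -> is_invariant F (orb F Finv B).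
Proof. intros Hinv z. split.
  - intros [a [b H]]. exists (S a), b. rewrite Nat.iter_succ_r, (Nat.iter_swap b), Hinv. exact H.
  - intros [a [b H]]. exists a, (S b). rewrite Nat.iter_succ_r. exact H. Qed.

Definition step {X} (O : X -> Prop) (K : X -> Prop) : X -> Prop :=
  fun z => (K z /\ ~ O z /\ exists w, K w /\ ~ O w) \/ (K z /\ ~ exists w, K w /\ ~ O w).

Lemma step_sub {X} (O K : X -> Prop) z : step O K z -> K z.
Proof. unfold step; tauto. Qed.
Lemma step_case1 {X} (O K : X -> Prop) : (exists w, K w /\ ~ O w) -> forall z, step O K z <-> K z /\ ~ O z.
Proof. unfold step; intros H z. split; [tauto|]. intros [H1 H2]; left; auto. Qed.
Lemma step_case2 {X} (O K : X -> Prop) : ~ (exists w, K w /\ ~ O w) -> forall z, step O K z <-> K z.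
Proof. unfold step; intros H z. split; [tauto|]. intros H1; right; auto. Qed.

Definition CIN {X} (d : X -> X -> R) (F : X -> X) (K : X -> Prop) :=
  is_closed d K /\ is_invariant F K /\ exists z, K z.

Lemma step_CIN {X} (d : X -> X -> R) F O K : is_open d O -> is_invariant F O -> CIN d F K -> CIN d F (step O K).
Proof. intros HO HOi [Hc [Hi [z Hz]]].
  destruct (classic (exists w, K w /\ ~ O w)) as [E|E].
  - pose proof (step_case1 O K E) as Hs. split; [|split].
    + apply (closed_ext d (fun x => K x /\ ~ O x)). intro; rewrite Hs; tauto.
      apply closed_and; auto. apply closed_not; auto.
    + intro x. rewrite !Hs, (Hi x), (HOi x). tauto.
    + destruct E as [w Hw]; exists w; apply Hs; auto.
  - pose proof (step_case2 O K E) as Hs. split; [|split].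
    + apply (closed_ext d K); auto. intro; rewrite Hs; tauto.
    + intro x. rewrite !Hs. auto.
    + exists z; apply Hs; auto. Qed.

Fixpoint Kseq {X} (Bf : nat -> X -> Prop) (F Finv : X -> X) (m : nat) : X -> Prop :=
  match m with 0 => fun _ => True | S m' => step (orb F Finv (Bf m')) (Kseq Bf F Finv m') end.

Lemma Kseq_CIN {X} (d : X -> X -> R) Bf F Finv (z0 : X) :
  is_continuous d F -> is_continuous d Finv -> (forall x, Finv (F x) = x) ->
  (forall m, is_open d (Bf m)) -> forall m, CIN d F (Kseq Bf F Finv m).
Proof. intros HF HG Hinv HB m. induction m; simpl.
  - split; [|split]. intros x H; exfalso; apply H; auto. intro; tauto. exists z0; auto.
  - apply step_CIN; auto. apply orb_open; auto. apply orb_inv; auto. Qed.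

Lemma Kseq_dec {X} (Bf : nat -> X -> Prop) F Finv m m' z : (m <= m')%nat ->
  Kseq Bf F Finv m' z -> Kseq Bf F Finv m z.
Proof. intro H; induction H; auto. intro H'; apply IHle. simpl in H'. eapply step_sub; eauto. Qed.

Lemma nested_nonempty {X} (d : X -> X -> R) (K : nat -> X -> Prop) : is_compact d ->
  (forall m, is_closed d (K m)) -> (forall m m' z, (m <= m')%nat -> K m' z -> K m z) ->
  (forall m, exists z, K m z) -> exists z, forall m, K m z.
Proof. intros Hc Hcl Hdec Hne. apply NNPP; intro Hno.
  destruct (Hc nat (fun m z => ~ K m z)) as [l Hl].
  - exact Hcl.
  - intro x. apply NNPP; intro H. apply Hno. exists x. intro m. apply NNPP; intro H'. apply H. exists m; exact H'.
  - destruct (Hne (list_max l)) as [z Hz]. destruct (Hl z) as [i [Hi Hzi]]. apply Hzi.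
    apply (Hdec i (list_max l)); auto.
    pose proof (proj1 (list_max_le l (list_max l)) (Nat.le_refl _)) as H.
    rewrite Forall_forall in H. auto. Qed.

Lemma inv_iterF {X} (F : X -> X) A : is_invariant F A -> forall n x, A x -> A (Nat.iter n F x).
Proof. intros H n; induction n; simpl; intros; auto. apply (proj1 (H _)); auto. Qed.
Lemma inv_iterG {X} (F Finv : X -> X) A : is_invariant F A -> (forall x, F (Finv x) = x) ->
  forall n x, A x -> A (Nat.iter n Finv x).
Proof. intros H H2 n; induction n; simpl; intros; auto. apply (proj2 (H _)). rewrite H2; auto. Qed.

Lemma minimal_subset {X} (d : X->X->R) (F Finv : X->X) :
  is_metric d -> is_compact d -> is_continuous d F -> is_continuous d Finv ->
  (forall x, Finv (F x) = x) -> (forall x, F (Finv x) = x) -> forall z0 : X,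
  exists K, is_closed d K /\ is_invariant F K /\ (exists z, K z) /\
    (forall A, is_closed d A -> is_invariant F A -> (exists z, A z) ->
       (forall z, A z -> K z) -> forall z, K z -> A z).
Proof.
  intros Hm Hc HF HG Hinv Hinv2 z0.
  assert (Hnet : forall k : nat, exists l : list X, forall y, exists c, In c l /\ d c y < / INR (S k)).
  { intro k. destruct (Hc X (fun c y => d c y < / INR (S k))) as [l Hl].
    - intro; apply ball_open; auto.
    - intro y. exists y. rewrite met_refl; auto. apply Rinv_0_lt_compat, lt_0_INR; lia.
    - exists l; auto. }
  apply functional_choice in Hnet. destruct Hnet as [net Hnet].
  set (Bf := fun m (y : X) => let p := Cantor.of_nat m in
          d (nth (snd p) (net (fst p)) z0) y < / INR (S (fst p))).
  assert (HBo : forall m, is_open d (Bf m)). { intro m. unfold Bf. apply ball_open; auto. }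
  pose proof (Kseq_CIN d Bf F Finv z0 HF HG Hinv HBo) as HK.
  exists (fun z => forall m, Kseq Bf F Finv m z). split; [|split; [|split]].
  - intros z Hz. apply not_all_ex_not in Hz. destruct Hz as [m Hm'].
    destruct (HK m) as [Hcl _]. destruct (Hcl z Hm') as [e [He H]].
    exists e; split; auto. intros y Hy Hall. apply (H y Hy). auto.
  - intro z. split; intros H m; destruct (HK m) as [_ [Hi _]]; [apply (proj1 (Hi _))|apply (proj2 (Hi _))]; auto.
  - apply (nested_nonempty d); auto.
    + intro m; apply HK.
    + intros; eapply Kseq_dec; eauto.
    + intro m; apply HK.
  - intros A HAc HAi [a Ha] Hsub z Hz. apply NNPP; intro Hnz.
    destruct (HAc z Hnz) as [e [He Hball]].
    destruct (archimed_cor1 (e/2)) as [N [HN HN0]]. lra.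
    set (k := pred N). assert (Hk : S k = N) by (unfold k; lia).
    destruct (Hnet k z) as [c [Hcin Hcz]].
    destruct (In_nth (net k) c z0 Hcin) as [i [_ Hi]].
    set (m := Cantor.to_nat (k, i)).
    assert (HBm : forall y, Bf m y <-> d c y < / INR (S k)).
    { intro y. unfold Bf, m. rewrite Cantor.cancel_of_to. simpl. rewrite Hi. tauto. }
    assert (Hr : / INR (S k) < e / 2) by (rewrite Hk; auto).
    assert (E : exists w, Kseq Bf F Finv m w /\ ~ orb F Finv (Bf m) w).
    { exists a. split. apply Hsub; auto. intros [p [q Hpq]].
      set (w := Nat.iter p Finv (Nat.iter q F a)) in *.
      assert (Aw : A w). { apply (inv_iterG F Finv); auto. apply inv_iterF; auto. }
      apply HBm in Hpq. apply (Hball w); auto.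
      pose proof (met_tri d Hm z c w). rewrite (met_sym d Hm z c) in H. lra. }
    pose proof (Hz (S m)) as Hz'. simpl in Hz'. rewrite (step_case1 _ _ E) in Hz'.
    destruct Hz' as [_ Hno]. apply Hno. exists 0%nat, 0%nat. simpl. apply HBm. auto.
Qed.

Lemma sig_eq {X} (K : X -> Prop) (p q : {z | K z}) : proj1_sig p = proj1_sig q -> p = q.
Proof. destruct p, q; simpl; intro; subst; f_equal; apply proof_irrelevance. Qed.

Definition FK {X} (F : X->X) (K : X -> Prop) (HKi : is_invariant F K) (p : {z | K z}) : {z | K z} :=
  exist _ (F (proj1_sig p)) (proj1 (HKi _) (proj2_sig p)).

Lemma inv_G {X} (F Finv : X -> X) (K : X -> Prop) : is_invariant F K -> (forall x, F (Finv x) = x) ->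
  forall z, K z -> K (Finv z).
Proof. intros H H2 z Hz. apply (proj2 (H _)). rewrite H2; auto. Qed.

Lemma subsystem {X} (d : X->X->R) (F Finv : X->X) (K : X -> Prop)
  (HKi : is_invariant F K) (Hinv2 : forall x, F (Finv x) = x) :
  is_metric d -> is_compact d -> is_continuous d F -> is_continuous d Finv -> (forall x, Finv (F x) = x) ->
  is_closed d K ->
  (forall A, is_closed d A -> is_invariant F A -> (exists z, A z) -> (forall z, A z -> K z) -> forall z, K z -> A z) ->
  is_system (fun p q : {z | K z} => d (proj1_sig p) (proj1_sig q)) (FK F K HKi) /\
  is_minimal (fun p q : {z | K z} => d (proj1_sig p) (proj1_sig q)) (FK F K HKi).
Proof.
  intros Hm Hc HF HG Hinv HKc Hmin. split; [split; [|split]|].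
  - split; [|split; [|split]].
    + intros; apply met_pos; auto.
    + intros p q; split. intro H; apply sig_eq; apply Hm; auto. intro; subst; apply met_refl; auto.
    + intros; apply met_sym; auto.
    + intros; apply met_tri; auto.
  - intros I C HCo Hcov.
    set (D := fun (o : option I) (x : X) => match o with None => ~ K x | Some i =>
       exists (q : {z | K z}) e, 0 < e /\ (forall r : {z | K z}, d (proj1_sig q) (proj1_sig r) < 2*e -> C i r)
          /\ d (proj1_sig q) x < e end).
    destruct (Hc (option I) D) as [l Hl].
    + intros [i|]; simpl.
      * intros x [q [e [He [H1 H2]]]]. exists (e - d (proj1_sig q) x). split. lra.
        intros y Hy. exists q, e. split; auto. split; auto.
        pose proof (met_tri d Hm (proj1_sig q) x y). lra.
      * exact HKc.
    + intro x. destruct (classic (K x)) as [h|h].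
      * destruct (Hcov (exist _ x h)) as [i Hi]. destruct (HCo i _ Hi) as [e [He He']].
        exists (Some i). simpl. exists (exist _ x h), (e/2). split. lra. split.
        intros r Hr. apply He'. simpl in *. lra. simpl. rewrite met_refl; auto. lra.
      * exists None. exact h.
    + exists (flat_map (fun o => match o with Some i => i :: nil | None => nil end) l).
      intro p. destruct (Hl (proj1_sig p)) as [[i|] [Hin HD]].
      * destruct HD as [q [e [He [H1 H2]]]]. exists i. split.
        apply in_flat_map. exists (Some i). simpl; auto.
        apply H1. lra.
      * exfalso. apply HD. exact (proj2_sig p).
  - split.
    + intros p e He. destruct (HF (proj1_sig p) e He) as [dl [Hd H]]. exists dl; split; auto. intros y Hy; apply H; auto.
    + exists (fun p => exist _ (Finv (proj1_sig p)) (inv_G F Finv K HKi Hinv2 _ (proj2_sig p))).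
      split; [|split].
      * intros p e He. destruct (HG (proj1_sig p) e He) as [dl [Hd H]]. exists dl; split; auto. intros y Hy; apply H; auto.
      * intro x. apply sig_eq. simpl. apply Hinv.
      * intro x. apply sig_eq. simpl. apply Hinv2.
  - intros A HAc HAi [p0 Hp0] p.
    set (A' := fun z => exists h : K z, A (exist _ z h)).
    assert (Atr : forall q q', proj1_sig q = proj1_sig q' -> A q -> A q').
    { intros q q' E Aq. rewrite <- (sig_eq K q q' E). auto. }
    assert (HA' : forall z, K z -> A' z).
    { apply Hmin.
      - intros z Hz. destruct (classic (K z)) as [h|h].
        + assert (Hn : ~ A (exist _ z h)) by (intro; apply Hz; exists h; auto).
          destruct (HAc _ Hn) as [e [He H]]. exists e; split; auto.
          intros y Hy [hy Ay]. apply (H (exist _ y hy)); auto.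
        + destruct (HKc z h) as [e [He H]]. exists e; split; auto.
          intros y Hy [hy _]. apply (H y Hy hy).
      - intro z. split.
        + intros [h Ah]. exists (proj1 (HKi _) h).
          apply (Atr (FK F K HKi (exist _ z h))). reflexivity. apply (proj1 (HAi _)). auto.
        + intros [h Ah]. exists (proj2 (HKi _) h).
          apply (proj2 (HAi _)).
          apply (Atr (exist _ (F z) h)). reflexivity. auto.
      - exists (proj1_sig p0). exists (proj2_sig p0). destruct p0; auto.
      - intros z [h _]; auto. }
    destruct (HA' (proj1_sig p) (proj2_sig p)) as [h Ah].
    replace p with (exist K (proj1_sig p) h); auto. apply sig_eq; auto.
Qed.

Definition dprod {X Y} (dX : X->X->R) (dY : Y->Y->R) (p q : X*Y) : R :=
  dX (fst p) (fst q) + dY (snd p) (snd q).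
Definition fprod {X Y} (f : X->X) (g : Y->Y) (p : X*Y) : X*Y := (f (fst p), g (snd p)).

Lemma prod_metric {X Y} (dX : X->X->R) (dY : Y->Y->R) : is_metric dX -> is_metric dY -> is_metric (dprod dX dY).
Proof. intros HX HY. unfold dprod. split; [|split; [|split]].
  - intros; pose proof (met_pos dX HX (fst x) (fst y)); pose proof (met_pos dY HY (snd x) (snd y)); lra.
  - intros [a b] [c e]; simpl. split.
    + intro H. pose proof (met_pos dX HX a c); pose proof (met_pos dY HY b e).
      assert (dX a c = 0) by lra. assert (dY b e = 0) by lra.
      apply HX in H2. apply HY in H3. subst; auto.
    + intro H; inversion H; subst. rewrite (met_refl dX HX), (met_refl dY HY). lra.
  - intros; rewrite (met_sym dX HX), (met_sym dY HY); auto.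
  - intros. pose proof (met_tri dX HX (fst x) (fst y) (fst z)). pose proof (met_tri dY HY (snd x) (snd y) (snd z)). lra.
Qed.

Lemma prod_cont {X Y} (dX : X->X->R) (dY : Y->Y->R) f g : is_metric dX -> is_metric dY ->
  is_continuous dX f -> is_continuous dY g -> is_continuous (dprod dX dY) (fprod f g).
Proof. intros HX HY Hf Hg p e He. unfold dprod, fprod; simpl.
  destruct (Hf (fst p) (e/2)) as [d1 [H1 H1']]. lra.
  destruct (Hg (snd p) (e/2)) as [d2 [H2 H2']]. lra.
  exists (Rmin d1 d2). split. apply Rmin_pos; auto. intros q Hq.
  pose proof (met_pos dX HX (fst p) (fst q)); pose proof (met_pos dY HY (snd p) (snd q)).
  pose proof (Rmin_l d1 d2); pose proof (Rmin_r d1 d2).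
  assert (dX (f (fst p)) (f (fst q)) < e/2) by (apply H1'; lra).
  assert (dY (g (snd p)) (g (snd q)) < e/2) by (apply H2'; lra). lra.
Qed.

Lemma fold_min_pos (l : list R) : (forall r, In r l -> 0 < r) -> 0 < fold_right Rmin 1 l.
Proof. induction l; simpl; intros. lra. apply Rmin_pos; auto. Qed.
Lemma fold_min_le (l : list R) r : In r l -> fold_right Rmin 1 l <= r.
Proof. induction l; simpl; intros H. contradiction. destruct H as [H|H].
  subst; apply Rmin_l. pose proof (Rmin_r a (fold_right Rmin 1 l)). pose proof (IHl H). lra. Qed.

Lemma prod_compact {X Y} (dX : X->X->R) (dY : Y->Y->R) : is_metric dX -> is_metric dY ->
  is_compact dX -> is_compact dY -> is_compact (dprod dX dY).
Proof. intros HX HY HcX HcY I C HCo Hcov.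
  assert (Hloc : forall xy : X*Y, exists p : I * R, 0 < snd p /\ forall x' y',
     dX (fst xy) x' < snd p -> dY (snd xy) y' < snd p -> C (fst p) (x',y')).
  { intro xy. destruct (Hcov xy) as [i Hi]. destruct (HCo i xy Hi) as [e [He H]].
    exists (i, e/2). simpl. split. lra. intros x' y' H1 H2. apply H. unfold dprod; simpl. lra. }
  apply functional_choice in Hloc. destruct Hloc as [g Hg].
  assert (HL : forall x, exists L : list Y, forall y', exists y, In y L /\ dY y y' < snd (g (x,y))).
  { intro x. destruct (HcY Y (fun y y' => dY y y' < snd (g (x,y)))) as [L HL].
    - intro y; apply ball_open; auto.
    - intro y. exists y. rewrite met_refl; auto. apply (Hg (x,y)).
    - exists L; auto. }
  apply functional_choice in HL. destruct HL as [L HL].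
  set (dl := fun x => fold_right Rmin 1 (map (fun y => snd (g (x,y))) (L x))).
  assert (Hdl : forall x, 0 < dl x).
  { intro x. apply fold_min_pos. intros r Hr. apply in_map_iff in Hr. destruct Hr as [y [<- _]]. apply (Hg (x,y)). }
  destruct (HcX X (fun x x' => dX x x' < dl x)) as [LX HLX].
  - intro; apply ball_open; auto.
  - intro x. exists x. rewrite met_refl; auto.
  - exists (flat_map (fun x => map (fun y => fst (g (x,y))) (L x)) LX).
    intros [x' y']. destruct (HLX x') as [x [Hx Hxx]]. destruct (HL x y') as [y [Hy Hyy]].
    exists (fst (g (x,y))). split.
    + apply in_flat_map. exists x. split; auto. apply in_map_iff. exists y; auto.
    + apply (proj2 (Hg (x,y))); simpl; auto.
      assert (dl x <= snd (g (x,y))). { apply fold_min_le. apply in_map_iff. exists y; auto. } lra.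
Qed.

Lemma dense_meet {X} (d : X->X->R) (T Tinv : X->X) (A U : X -> Prop) :
  is_metric d -> is_continuous d T -> is_continuous d Tinv ->
  (forall x, Tinv (T x) = x) -> (forall x, T (Tinv x) = x) ->
  is_minimal d T -> (forall x, A x -> A (T x)) -> (forall x, A x -> A (Tinv x)) ->
  (exists a, A a) -> is_open d U -> (exists u, U u) -> exists x, A x /\ U x.
Proof.
  intros Hm HT HG Hinv Hinv2 Hmin HAT HAG [a Ha] HU [u Hu].
  set (cl := fun z => forall e, 0 < e -> exists a, A a /\ d z a < e).
  assert (Hcl : forall z, cl z).
  { apply Hmin.
    - intros z Hz. unfold cl in Hz. apply not_all_ex_not in Hz. destruct Hz as [e He].
      apply imply_to_and in He. destruct He as [He Hno].
      exists (e/2). split. lra. intros y Hy Hcy. destruct (Hcy (e/2)) as [b [Hb Hyb]]. lra.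
      apply Hno. exists b. split; auto. pose proof (met_tri d Hm z y b). lra.
    - intro z. split.
      + intros Hz e He. destruct (HT z e He) as [dl [Hd H]]. destruct (Hz dl Hd) as [b [Hb Hzb]].
        exists (T b). split; auto.
      + intros Hz e He. destruct (HG (T z) e He) as [dl [Hd H]]. destruct (Hz dl Hd) as [b [Hb Hzb]].
        exists (Tinv b). split; auto. specialize (H b Hzb). rewrite Hinv in H. auto.
    - exists a. intros e He. exists a. split; auto. rewrite met_refl; auto. }
  destruct (HU u Hu) as [e [He H]]. destruct (Hcl u e He) as [b [Hb Hub]]. exists b; auto.
Qed.

Lemma fst_iter {X Y} (f : X -> X) (g : Y -> Y) n p : fst (Nat.iter n (fprod f g) p) = Nat.iter n f (fst p).
Proof. induction n; simpl; auto. rewrite IHn; auto. Qed.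
Lemma snd_iter {X Y} (f : X -> X) (g : Y -> Y) n p : snd (Nat.iter n (fprod f g) p) = Nat.iter n g (snd p).
Proof. induction n; simpl; auto. rewrite IHn; auto. Qed.

Lemma iter_comm {X} (f g : X -> X) : (forall z, f (g z) = g (f z)) ->
  forall m a z, Nat.iter m f (Nat.iter a g z) = Nat.iter a g (Nat.iter m f z).
Proof. intros H.
  assert (H1 : forall a z, f (Nat.iter a g z) = Nat.iter a g (f z)).
  { induction a; simpl; intros; auto. rewrite H, IHa; auto. }
  induction m; simpl; intros; auto. rewrite IHm, H1; auto. Qed.

Lemma val_iter {X} (F : X -> X) (K : X -> Prop) (HKi : is_invariant F K) m q :
  proj1_sig (Nat.iter m (FK F K HKi) q) = Nat.iter m F (proj1_sig q).
Proof. induction m; simpl; auto. rewrite IHm; auto. Qed.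

Theorem mainTheorem15 (l : nat) (Rs : nat -> Prop)
  (X : Type) (d : X -> X -> R) (T : X -> X) (U : X -> Prop) :
  (1 <= l)%nat ->
  recurrence_set l Rs ->
  is_system d T -> is_minimal d T ->
  is_open d U -> (exists x, U x) ->
  recurrence_set l (fun n => Rs n /\ return_set T l U n).
Proof.
  intros Hl HR [HmX [HcX [HTc [Tinv [HTinvc [HT1 HT2]]]]]] HminX HUo [u Hu].
  intros Y dY S [HmY [HcY [HSc [Sinv [HSinvc [HS1 HS2]]]]]] HminY V HVo [v Hv].
  set (dP := dprod d dY). set (F := fprod T S). set (Finv := fprod Tinv Sinv).
  assert (HmP : is_metric dP) by (apply prod_metric; auto).
  assert (HcP : is_compact dP) by (apply prod_compact; auto).
  assert (HFc : is_continuous dP F) by (apply prod_cont; auto).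
  assert (HGc : is_continuous dP Finv) by (apply prod_cont; auto).
  assert (Hi1 : forall p, Finv (F p) = p)
    by (intros [x y]; unfold F, Finv, fprod; simpl; rewrite HT1, HS1; auto).
  assert (Hi2 : forall p, F (Finv p) = p)
    by (intros [x y]; unfold F, Finv, fprod; simpl; rewrite HT2, HS2; auto).
  destruct (minimal_subset dP F Finv HmP HcP HFc HGc Hi1 Hi2 (u,v)) as [M [HMc [HMi [HMne HMmin]]]].
  assert (HMF : forall p, M p -> M (F p)) by (intros p Hp; apply (proj1 (HMi p)); auto).
  assert (HMG : forall p, M p -> M (Finv p)) by (intros p Hp; apply (proj2 (HMi _)); rewrite Hi2; auto).
  destruct (dense_meet d T Tinv (fun x => exists y, M (x,y)) U HmX HTc HTinvc HT1 HT2 HminX)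
    as [x1 [[y1 HM1] HU1]].
  - intros x [y H]. exists (S y). exact (HMF (x,y) H).
  - intros x [y H]. exists (Sinv y). exact (HMG (x,y) H).
  - destruct HMne as [[x y] H]; exists x, y; auto.
  - auto.
  - exists u; auto.
  - destruct (dense_meet dY S Sinv (fun y => exists x, M (x,y)) V HmY HSc HSinvc HS1 HS2 HminY)
      as [y2 [[x2 HM2] HV2]].
    + intros y [x H]. exists (T x). exact (HMF (x,y) H).
    + intros y [x H]. exists (Tinv x). exact (HMG (x,y) H).
    + destruct HMne as [[x y] H]; exists y, x; auto.
    + auto.
    + exists v; auto.
    + set (Bv := fun p : X*Y => V (snd p)).
      assert (HBv : is_open dP Bv).
      { intros p Hp. destruct (HVo _ Hp) as [e [He H]]. exists e; split; auto.
        intros q Hq. apply H. unfold dP, dprod in Hq. pose proof (met_pos d HmX (fst p) (fst q)). lra. }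
      assert (Horb : forall p, M p -> orb F Finv Bv p).
      { intros p Hp. apply NNPP; intro Hno.
        assert (Hall := HMmin (fun q => M q /\ ~ orb F Finv Bv q)).
        assert (Hx : M (x2,y2) /\ ~ orb F Finv Bv (x2,y2)).
        { apply Hall; auto.
          - apply closed_and; auto. apply closed_not; apply orb_open; auto.
          - intro q. rewrite (HMi q), (orb_inv F Finv Bv Hi1 q). tauto.
          - exists p; auto.
          - intros q [H _]; auto. }
        apply (proj2 Hx). exists 0%nat, 0%nat. simpl. exact HV2. }
      destruct (Horb (x1,y1) HM1) as [a [b Hab]].
      unfold Bv, Finv, F in Hab. rewrite snd_iter, snd_iter in Hab. simpl in Hab.
      set (g := fun y => Nat.iter a Sinv (Nat.iter b S y)) in *.
      destruct (subsystem dP F Finv M HMi Hi2 HmP HcP HFc HGc Hi1 HMc HMmin) as [HsysM HminM].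
      set (W := fun q : {p | M p} => U (fst (proj1_sig q)) /\ V (g (snd (proj1_sig q)))).
      destruct (HR _ _ _ HsysM HminM W) as [n [Hn [HRn [q Hq]]]].
      * intros q [Hq1 Hq2]. destruct (HUo _ Hq1) as [e1 [He1 H1]].
        destruct (HVo _ Hq2) as [e2 [He2 H2]].
        assert (Hgc : is_continuous dY g).
        { apply (cont_comp dY (fun x => Nat.iter a Sinv x) (fun x => Nat.iter b S x)); apply cont_iter; auto. }
        destruct (Hgc (snd (proj1_sig q)) e2 He2) as [d2 [Hd2 H2']].
        exists (Rmin e1 d2). split. apply Rmin_pos; auto. intros r Hr.
        unfold dP, dprod in Hr. pose proof (met_pos d HmX (fst (proj1_sig q)) (fst (proj1_sig r))).
        pose proof (met_pos dY HmY (snd (proj1_sig q)) (snd (proj1_sig r))).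
        pose proof (Rmin_l e1 d2); pose proof (Rmin_r e1 d2).
        split. apply H1; lra. apply H2, H2'; lra.
      * exists (exist _ (x1,y1) HM1). split; simpl; auto.
      * exists n. split; auto. split. split; auto.
        -- exists (fst (proj1_sig q)). intros j Hj. destruct (Hq j Hj) as [H1 _].
           rewrite val_iter in H1. unfold F in H1. rewrite fst_iter in H1. auto.
        -- exists (g (snd (proj1_sig q))). intros j Hj. destruct (Hq j Hj) as [_ H2].
           rewrite val_iter in H2. unfold F in H2. rewrite snd_iter in H2. unfold g in *.
           rewrite (iter_comm S Sinv), (iter_comm S S); auto.
           intro z. rewrite HS1, HS2; auto.
Qed.
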